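(* Let $k\ge1$ be fixed and consider the asymptotic regime $n\to\infty$. For $1\le i,j\le n$ let $\mathsf d_{i,j,\mathrm{noisy}}\ge0$ and $\mathsf d_{i,j,\mathrm{clean}}\ge0$ be scalar dissimilarities (possibly random), and suppose there exist $\xi_n\in\mathbb R$ with $$\sup_{i\ne j}\big|\mathsf d^2_{i,j,\mathrm{noisy}}-\mathsf d^2_{i,j,\mathrm{clean}}-\xi_n\big|=o_P(1).$$ For a fixed $\nu>0$ set $\tilde w_{i,j}=\exp(-\mathsf d^2_{i,j,\mathrm{noisy}}/\nu)$, $w_{i,j}=\exp(-\mathsf d^2_{i,j,\mathrm{clean}}/\nu)$, $W=(w_{i,j})$, $\widetilde W=(\tilde w_{i,j})$. Let $G,\widetilde G$ be $nk\times nk$ block matrices with $k\times k$ blocks $G_{i,j},\widetilde G_{i,j}$ (connections between clean, resp. noisy, versions of objects $i$ and $j$). Suppose that there is a constant $C>0$ with $\sup_{i,j}\|G_{i,j}\|_F\le C$, $\sup_{i,j}\|\widetilde G_{i,j}\|_F\le C$, that $\sup_{i,j}\|\widetilde G_{i,j}-G_{i,j}\|_F=o_P(1)$, and that $\inf_i\frac1n\sum_{j\ne i}w_{i,j}>\gamma$ with $\gamma$ bounded below by a positive constant as $n\to\infty$. Then $$\|L(W,G)-L_0(\widetilde W,\widetilde G)\|_{op}=o_P(1).$$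
   Context: For an $n\times n$ matrix $W$ and an $nk\times nk$ block matrix $G$, $S$ is the block matrix with blocks $w_{i,j}G_{i,j}$, $D$ is block diagonal with blocks $(\sum_{j\ne i}w_{i,j})\mathrm I_k$, $L(W,G)=D^{-1}S$, and $L_0(W,G)=L(W\circ1_{i\ne j},G)$, i.e. computed after setting the diagonal weights to $0$. $o_P(1)$ denotes convergence to $0$ in probability as $n\to\infty$. *)

(* Defs.v *)
From HB Require Import structures.
From mathcomp Require Import all_boot all_order all_algebra.
From mathcomp Require Import all_classical all_reals all_analysis.
Set Implicit Arguments. Unset Strict Implicit. Unset Printing Implicit Defensive.
Import Order.TTheory GRing.Theory Num.Theory.
Local Open Scope classical_set_scope.
Local Open Scope ring_scope.

Section Defs.
Variable R : realType.

Definition frob (k : nat) (A : 'M[R]_k) : R :=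
  Num.sqrt (\sum_(a < k) \sum_(b < k) (A a b) ^+ 2).

Definition vnorm (m : nat) (x : 'cV[R]_m) : R :=
  Num.sqrt (\sum_(a < m) (x a 0) ^+ 2).

Definition opnorm (m p : nat) (A : 'M[R]_(m, p)) : R :=
  sup [set vnorm (A *m x) | x in [set x : 'cV[R]_p | vnorm x <= 1]].

Definition Smx (n k : nat) (W : 'M[R]_n) (G : 'I_n -> 'I_n -> 'M[R]_k)
  : 'M[R]_(\sum_(i < n) k) :=
  \mxblock_(i < n, j < n) (W i j *: G i j).

Definition Dmx (n k : nat) (W : 'M[R]_n) : 'M[R]_(\sum_(i < n) k) :=
  \mxdiag_(i < n) ((\sum_(j < n | j != i) W i j) *: (1%:M : 'M[R]_k)).

Definition Lmx (n k : nat) (W : 'M[R]_n) (G : 'I_n -> 'I_n -> 'M[R]_k)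
  : 'M[R]_(\sum_(i < n) k) :=
  invmx (Dmx k W) *m Smx W G.

Definition offdiag (n : nat) (W : 'M[R]_n) : 'M[R]_n :=
  \matrix_(i < n, j < n) (if i == j then 0 else W i j).

Definition L0mx (n k : nat) (W : 'M[R]_n) (G : 'I_n -> 'I_n -> 'M[R]_k)
  : 'M[R]_(\sum_(i < n) k) :=
  Lmx (offdiag W) G.

(* X_n = o_P(1): convergence to 0 in (outer) probability *)
Definition oP1 (d : measure_display) (T : measurableType d)
  (P : probability T R) (X : nat -> T -> R) : Prop :=
  forall eps : R, 0 < eps -> forall delta : R, 0 < delta ->
    exists N : nat, forall n : nat, (N <= n)%N ->
      exists A : set T, measurable A /\
        [set w | eps < `|X n w|] `<=` A /\ (P A <= delta%:E)%E.

Definition sup_offdiag (n : nat) (f : 'I_n -> 'I_n -> R) : R :=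
  \big[Num.max/0]_(i < n) \big[Num.max/0]_(j < n | j != i) `|f i j|.

Definition sup_all (n : nat) (f : 'I_n -> 'I_n -> R) : R :=
  \big[Num.max/0]_(i < n) \big[Num.max/0]_(j < n) `|f i j|.

End Defs.

(* Main.v *)
Require Import Defs.
From HB Require Import structures.
From mathcomp Require Import all_boot all_order all_algebra.
From mathcomp Require Import all_classical all_reals all_analysis.
From mathcomp Require Import ring lra.
Import Order.TTheory GRing.Theory Num.Theory.
Local Open Scope classical_set_scope.
Local Open Scope ring_scope.

Section H.
Variable R : realType.

Lemma cs_ineq (m : nat) (a x : 'I_m -> R) :
  (\sum_q a q * x q) ^+ 2 <= (\sum_q a q ^+ 2) * (\sum_q x q ^+ 2).
Proof.
have H : 2 * ((\sum_q a q ^+ 2) * (\sum_q x q ^+ 2) - (\sum_q a q * x q) ^+ 2)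
   = \sum_q \sum_r (a q * x r - a r * x q) ^+ 2.
  have E : forall q, \sum_r (a q * x r - a r * x q) ^+ 2 =
     \sum_r (a q ^+ 2 * x r ^+ 2) + \sum_r (a r ^+ 2 * x q ^+ 2)
     - 2 * \sum_r (a q * x q * (a r * x r)).
    move=> q; rewrite mulr_sumr -big_split -sumrB /=.
    by apply: eq_bigr => r _; ring.
  rewrite (eq_bigr _ (fun q _ => E q)) sumrB big_split /=.
  rewrite -!mulr_sumr.
  have -> : \sum_i \sum_r a i ^+ 2 * x r ^+ 2 = (\sum_q a q ^+ 2) * (\sum_q x q ^+ 2).
    by rewrite mulr_suml; apply: eq_bigr => i _; rewrite mulr_sumr.
  have -> : \sum_i \sum_r a r ^+ 2 * x i ^+ 2 = (\sum_q a q ^+ 2) * (\sum_q x q ^+ 2).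
    by rewrite mulrC mulr_suml; apply: eq_bigr => i _; rewrite mulr_sumr;
      apply: eq_bigr => r _; rewrite mulrC.
  have -> : \sum_i \sum_r a i * x i * (a r * x r) = (\sum_q a q * x q) ^+ 2.
    by rewrite expr2 mulr_suml; apply: eq_bigr => i _; rewrite mulr_sumr.
  ring.
have H0 : 0 <= \sum_q \sum_r (a q * x r - a r * x q) ^+ 2.
  by apply: sumr_ge0 => q _; apply: sumr_ge0 => r _; apply: sqr_ge0.
rewrite -H in H0; lra.
Qed.

Lemma opnorm_bound (m : nat) (M : 'M[R]_m) (B : R) : 0 <= B ->
  \sum_p \sum_q M p q ^+ 2 <= B ^+ 2 -> 0 <= opnorm M /\ opnorm M <= B.
Proof.
move=> B0 HS.
set E := [set vnorm (M *m x) | x in [set x : 'cV[R]_m | vnorm x <= 1]].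
have E0 : E (vnorm (M *m 0)).
  exists 0 => //; rewrite /vnorm /= big1 ?sqrtr0 // => i _; by rewrite mxE expr0n.
have ub : ubound E B.
  move=> y [x Hx <-]; rewrite /vnorm.
  have Hx2 : \sum_q x q 0 ^+ 2 <= 1.
    have Hx1 : vnorm x <= 1 := Hx.
    by move: Hx1; rewrite /vnorm -[X in _ <= X]sqrtr1 ler_sqrt // ler01.
  rewrite -(ger0_norm B0) -sqrtr_sqr ler_sqrt; last by apply: sqr_ge0.
  apply: le_trans HS; apply: ler_sum => p _; rewrite mxE.
  have hc := cs_ineq _ (M p) (fun j => x j 0); apply: (le_trans hc).
  have h1 : 0 <= \sum_q M p q ^+ 2 by apply: sumr_ge0 => *; apply: sqr_ge0.
  by rewrite -[X in _ <= X]mulr1 ler_wpM2l.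
split; last by apply: ge_sup => //; exists (vnorm (M *m 0)).
have hub : has_ubound E by exists B.
apply: le_trans (ub_le_sup hub E0).
by rewrite /vnorm sqrtr_ge0.
Qed.


Lemma Lmx_entry (n k : nat) (W : 'M[R]_n) (G : 'I_n -> 'I_n -> 'M[R]_k)
  (p q : 'I_(\sum_(i < n) k)) :
  (forall i, \sum_(j < n | j != i) W i j != 0) ->
  Lmx W G p q = (\sum_(j < n | j != tagnat.sig1 p) W (tagnat.sig1 p) j)^-1 *
     (W (tagnat.sig1 p) (tagnat.sig1 q) *
      G (tagnat.sig1 p) (tagnat.sig1 q) (tagnat.sig2 p) (tagnat.sig2 q)).
Proof.
move=> Hc.
pose c i := \sum_(j < n | j != i) W i j.
pose v := \mxrow_(i < n) (const_mx (c i) : 'rV[R]_k).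
pose v' := \mxrow_(i < n) (const_mx (c i)^-1 : 'rV[R]_k).
have HD : Dmx k W = diag_mx v.
  rewrite /Dmx /v diag_mxrow; apply: eq_mxdiag => i.
  by rewrite diag_const_mx scalemx1.
have Hv s : v 0 s = c (tagnat.sig1 s) by rewrite /v /mxrow mxE mxE.
have Hv' s : v' 0 s = (c (tagnat.sig1 s))^-1 by rewrite /v' /mxrow mxE mxE.
have H1 : diag_mx v *m diag_mx v' = 1%:M.
  apply/matrixP => s t; rewrite mul_diag_mx !mxE.
  by case: (s == t); rewrite ?mulr0n ?mulr1n ?mulr0 // divff //; apply: Hc.
have Hinv : invmx (Dmx k W) = diag_mx v'.
  have [Hu _] := mulmx1_unit H1.
  by rewrite HD -[RHS]mul1mx -(mulVmx Hu) -mulmxA H1 mulmx1.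
by rewrite /Lmx Hinv mul_diag_mx mxE Hv' /Smx /mxblock !mxE.
Qed.

Lemma entry_le_frob (k : nat) (A : 'M[R]_k) a b : `|A a b| <= frob A.
Proof.
rewrite /frob -sqrtr_sqr ler_sqrt; last first.
  by apply: sumr_ge0 => *; apply: sumr_ge0 => *; apply: sqr_ge0.
rewrite (bigD1 a) //= (bigD1 b) //=.
rewrite -addrA lerDl addr_ge0 //.
  by apply: sumr_ge0 => *; apply: sqr_ge0.
by apply: sumr_ge0 => *; apply: sumr_ge0 => *; apply: sqr_ge0.
Qed.

Lemma le_bigmax0 (I : finType) (P : pred I) (F : I -> R) i :
  P i -> F i <= \big[Num.max/0]_(j | P j) F j.
Proof. by move=> Pi; rewrite (bigD1 i) //= le_max lexx. Qed.

Lemma sum_ordsum (n k : nat) (f : 'I_(\sum_(i < n) k) -> R) :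
  \sum_p f p = \sum_(i < n) \sum_(a < k) f (@tagnat.Rank n (fun _ => k) i a).
Proof.
rewrite (reindex (@tagnat.rank n (fun _ => k))) /=; last first.
  by apply: tagnat.rank_bij_on.
rewrite (sig_big_dep (fun _ => true) (fun _ _ => true) (fun i (a : 'I_k) => f (@tagnat.Rank n (fun _ => k) i a))) /=.
by apply: eq_bigr => -[i a] _; rewrite tagnat.rankE.
Qed.


Lemma ratio_bound (W Wt c e s lam : R) : 0 < c -> 0 < e -> 0 < s -> 1 <= lam -> 0 <= W ->
  s * W <= lam * Wt -> Wt <= lam * s * W -> s * c <= lam * e -> e <= lam * s * c ->
  `|W / c - Wt / e| <= W / c * (lam ^+ 2 - 1).
Proof.
move=> c0 e0 s0 l1 W0 h1 h2 h3 h4.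
set u := W / c; set v := Wt / e.
have hu : u * c = W by rewrite /u mulfVK // gt_eqF.
have hv : v * e = Wt by rewrite /v mulfVK // gt_eqF.
have u0 : 0 <= u by rewrite /u divr_ge0 // ltW.
set L := lam ^+ 2.
have L1 : 1 <= L by rewrite /L expr2; nra.
have hup : Wt * c <= L * W * e.
  have a1 : 0 <= c by apply: ltW.
  have a2 : 0 <= lam * W by nra.
  rewrite /L; nra.
have hlo : s * W * e <= s * (L * Wt * c).
  have a1 : 0 <= lam * s * c by nra.
  have a2 : 0 <= s * W by nra.
  rewrite /L; nra.
have hlo' : W * e <= L * Wt * c.
  by rewrite -(ler_pM2l s0) mulrA.
have vup : v <= L * u.
  rewrite -(ler_pM2r (mulr_gt0 e0 c0)).
  have -> : v * (e * c) = Wt * c by rewrite -hv; ring.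
  have -> : L * u * (e * c) = L * W * e by rewrite -hu; ring.
  exact: hup.
have vlo : u <= L * v.
  rewrite -(ler_pM2r (mulr_gt0 e0 c0)).
  have -> : L * v * (e * c) = L * Wt * c by rewrite -hv; ring.
  have -> : u * (e * c) = W * e by rewrite -hu; ring.
  exact: hlo'.
rewrite ler_norml; apply/andP; split; last by nra.
nra.
Qed.


Lemma det_entry n k (W Wt : 'M[R]_n) (G Gt : 'I_n -> 'I_n -> 'M[R]_k)
  (C gam eG lam s : R) :
  0 < gam -> 0 <= C -> 1 <= lam -> 0 < s ->
  (forall i j, 0 < W i j <= 1) ->
  (forall i j, i != j -> s * W i j <= lam * Wt i j /\ Wt i j <= lam * s * W i j) ->
  (forall i, gam * n%:R < \sum_(j < n | j != i) W i j) ->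
  (forall i j, frob (G i j) <= C /\ frob (Gt i j) <= C) ->
  (forall i j, frob (Gt i j - G i j) <= eG) ->
  forall p q, `|(Lmx W G - L0mx Wt Gt) p q| <=
     (eG + C * (lam ^+ 2 - 1)) / (gam * n%:R)
     + C / (gam * n%:R) * (tagnat.sig1 p == tagnat.sig1 q)%:R.
Proof.
move=> g0 C0 l1 s0 HW HWt Hg HC HE p q.
pose c i := \sum_(j < n | j != i) W i j.
pose e i := \sum_(j < n | j != i) offdiag Wt i j.
have he i : e i = \sum_(j < n | j != i) Wt i j.
  by apply: eq_bigr => j hj; rewrite mxE eq_sym (negbTE hj).
have gn0 : 0 <= gam * n%:R by rewrite mulr_ge0 // ltW.
have cpos i : 0 < c i by apply: le_lt_trans (Hg i).
have sce i : s * c i <= lam * e i.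
  rewrite he /c mulr_sumr mulr_sumr; apply: ler_sum => j hj.
  by case: (HWt i j); rewrite // eq_sym.
have ecs i : e i <= lam * s * c i.
  rewrite he /c mulr_sumr; apply: ler_sum => j hj.
  by case: (HWt i j); rewrite // eq_sym.
have epos i : 0 < e i.
  have := sce i; have := cpos i => ci h.
  have l0 : 0 < lam by lra.
  have : 0 < lam * e i by apply: lt_le_trans h; rewrite mulr_gt0.
  by rewrite pmulr_rgt0.
have -> : (Lmx W G - L0mx Wt Gt) p q = Lmx W G p q - Lmx (offdiag Wt) Gt p q by rewrite !mxE.
rewrite !Lmx_entry; last first.
- by move=> i; rewrite gt_eqF // (cpos i).
- by move=> i; rewrite gt_eqF // (epos i).
rewrite mxE -/(c _) -/(e _).
set i := tagnat.sig1 p; set j := tagnat.sig1 q.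
set a := tagnat.sig2 p; set b := tagnat.sig2 q.
have hg : `|G i j a b| <= C by apply: le_trans (entry_le_frob _ (G i j) a b) (proj1 (HC i j)).
have hgt : `|Gt i j a b| <= C by apply: le_trans (entry_le_frob _ (Gt i j) a b) (proj2 (HC i j)).
have hd : `|Gt i j a b - G i j a b| <= eG.
  have := entry_le_frob _ (Gt i j - G i j) a b; rewrite !mxE => h.
  by apply: le_trans h (HE i j).
have eG0 : 0 <= eG by apply: le_trans (normr_ge0 _) hd.
have [W0 W1] := andP (HW i j).
have hn : (0 < n)%N by apply: (leq_ltn_trans (leq0n _) (ltn_ord i)).
have gnp : 0 < gam * n%:R by rewrite mulr_gt0 // ltr0n.
have ic : (c i)^-1 <= (gam * n%:R)^-1.
  by rewrite lef_pV2 ?posrE ?cpos // ltW // (Hg i).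
have ic0 : 0 <= (c i)^-1 by rewrite invr_ge0 ltW // cpos.
have gi0 : 0 <= (gam * n%:R)^-1 by rewrite invr_ge0 ltW.
have ng0 : 0 <= `|G i j a b| by apply: normr_ge0.
case: eqP => [Hij|Hij].
  rewrite mul0r mulr0 subr0 mulr1 normrM normrM (ger0_norm ic0) (ger0_norm (ltW W0)).
  have h1 : (c i)^-1 * (W i j * `|G i j a b|) <= (c i)^-1 * C.
    by apply: ler_wpM2l => //; nra.
  have h2 : (c i)^-1 * C <= (gam * n%:R)^-1 * C by apply: ler_wpM2r.
  have h3 : 0 <= (eG + C * (lam ^+ 2 - 1)) / (gam * n%:R).
    apply: divr_ge0; last by apply: ltW.
    have : 1 <= lam ^+ 2 by rewrite expr2; nra.
    nra.
  rewrite mulrC [C / _]mulrC. lra.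
have Hij' : i != j by apply/eqP.
have [hr1 hr2] := HWt i j Hij'.
have rb := ratio_bound (W i j) (Wt i j) (c i) (e i) s lam (cpos i) (epos i) s0 l1 (ltW W0) hr1 hr2 (sce i) (ecs i).
rewrite mulr0 addr0.
set u := W i j / c i; set v := Wt i j / e i.
have -> : (c i)^-1 * (W i j * G i j a b) - (e i)^-1 * (Wt i j * Gt i j a b)
   = u * (G i j a b - Gt i j a b) + (u - v) * Gt i j a b.
  by rewrite /u /v; ring.
have u0 : 0 <= u by rewrite /u divr_ge0 // ltW // cpos.
have uub : u <= (gam * n%:R)^-1.
  by apply: le_trans ic; rewrite /u mulrC ler_piMr.
apply: le_trans (ler_normD _ _) _.
rewrite [`|u * _|]normrM (ger0_norm u0) [`|(u - v) * _|]normrM.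
have hd' : `|G i j a b - Gt i j a b| <= eG by rewrite distrC.
have L1 : 0 <= lam ^+ 2 - 1 by rewrite subr_ge0 expr2; nra.
have t1 : u * `|G i j a b - Gt i j a b| <= u * eG by apply: ler_wpM2l.
have t2 : `|u - v| * `|Gt i j a b| <= u * (lam ^+ 2 - 1) * C.
  apply: ler_pM => //; apply: normr_ge0.
have t3 : u * (eG + C * (lam ^+ 2 - 1)) <= (gam * n%:R)^-1 * (eG + C * (lam ^+ 2 - 1)).
  by apply: ler_wpM2r => //; nra.
rewrite mulrC; nra.
Qed.



Lemma sumk (n k : nat) : (\sum_(i < n) k = n * k)%N.
Proof. by rewrite big_const_ord iter_addn_0 mulnC. Qed.

Lemma sum_ind (n k : nat) (p : 'I_(\sum_(i < n) k)) :
  \sum_(q : 'I_(\sum_(i < n) k)) ((tagnat.sig1 p == tagnat.sig1 q)%:R : R) = k%:R.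
Proof.
rewrite sum_ordsum.
rewrite (eq_bigr (fun j => ((tagnat.sig1 p == j)%:R : R) *+ k)); last first.
  move=> j _; rewrite (eq_bigr (fun _ => ((tagnat.sig1 p == j)%:R : R))).
    by rewrite sumr_const card_ord.
  by move=> b _; rewrite tagnat.Rank1K.
rewrite (bigD1 (tagnat.sig1 p)) //= eqxx big1 ?addr0 //.
by move=> j hj; rewrite eq_sym (negbTE hj) mul0rn.
Qed.

Lemma sum_bound (n k : nat) (M : 'M[R]_(\sum_(i < n) k)) (x y : R) :
  0 <= x -> 0 <= y ->
  (forall p q, `|M p q| <= x + y * (tagnat.sig1 p == tagnat.sig1 q)%:R) ->
  \sum_p \sum_q M p q ^+ 2 <=
    2 * x ^+ 2 * ((n * k)%:R) ^+ 2 + 2 * y ^+ 2 * (n * k * k)%:R.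
Proof.
move=> x0 y0 HM.
have H1 p q : M p q ^+ 2 <= 2 * x ^+ 2 + 2 * y ^+ 2 * (tagnat.sig1 p == tagnat.sig1 q)%:R.
  have := HM p q; case: (tagnat.sig1 p == tagnat.sig1 q) => /= h.
    rewrite mulr1 in h; rewrite mulr1.
    have n0 := normr_ge0 (M p q).
    have h2 : `|M p q| ^+ 2 <= (x + y) ^+ 2 by rewrite ler_pXn2r // ?nnegrE ?addr_ge0.
    have h3 : 0 <= (x - y) ^+ 2 by apply: sqr_ge0.
    rewrite -real_normK ?num_real; nra.
  rewrite mulr0 addr0 in h; rewrite mulr0 addr0.
  have n0 := normr_ge0 (M p q).
  rewrite -real_normK ?num_real; nra.
have Hs : \sum_p \sum_q M p q ^+ 2 <= \sum_p \sum_q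
   (2 * x ^+ 2 + 2 * y ^+ 2 * (@tagnat.sig1 n (fun _ => k) p == @tagnat.sig1 n (fun _ => k) q)%:R).
  by apply: ler_sum => p _; apply: ler_sum => q _; exact: H1.
apply: le_trans Hs _.
rewrite le_eqVlt; apply/orP; left; apply/eqP.
have hk : #|'I_(\sum_(i < n) k)| = (n * k)%N by rewrite card_ord sumk.
rewrite (eq_bigr (fun p => 2 * x ^+ 2 *+ (n * k) + 2 * y ^+ 2 * k%:R)); last first.
  by move=> p _; rewrite big_split /= -[X in _ + X]mulr_sumr sum_ind sumr_const hk.
rewrite sumr_const hk.
rewrite -[LHS]mulr_natr -[2 * x ^+ 2 *+ _]mulr_natr !natrM; ring.
Qed.

Lemma expR_small (t : R) : 0 <= t -> t <= 1 / 2 -> expR t <= 1 + 2 * t.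
Proof.
move=> t0 t1.
have hF : 1 - t <= expR (- t) by have := expR_ge1Dx (- t); lra.
have hEF : expR t * expR (- t) = 1 by rewrite expRxMexpNx_1.
have E0 := expR_gt0 t.
have h1 : expR t * (1 - t) <= 1 by rewrite -[X in _ <= X]hEF; apply: ler_wpM2l => //; apply: ltW.
have h2 : expR t <= 2 by nra.
nra.
Qed.

Lemma final_arith (A C gam eps K nn : R) : 0 < gam -> 0 < eps -> 0 < K -> 0 < nn ->
  0 <= A -> A / gam <= eps / (2 * K) ->
  4 * C ^+ 2 * K ^+ 2 / (gam ^+ 2 * eps ^+ 2) < nn ->
  2 * (A / (gam * nn)) ^+ 2 * (nn * K) ^+ 2 + 2 * (C / (gam * nn)) ^+ 2 * (nn * K * K)
    <= eps ^+ 2.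
Proof.
move=> g0 e0 K0 n0 A0 hA hn.
have e1 : 2 * (A / (gam * nn)) ^+ 2 * (nn * K) ^+ 2 = 2 * (A / gam) ^+ 2 * K ^+ 2.
  by field; rewrite ?gt_eqF.
have e2 : 2 * (C / (gam * nn)) ^+ 2 * (nn * K * K)
     = (4 * C ^+ 2 * K ^+ 2 / (gam ^+ 2 * eps ^+ 2)) / nn * (eps ^+ 2 / 2).
  by field; rewrite ?gt_eqF.
rewrite e1 e2.
have Ag0 : 0 <= A / gam by rewrite divr_ge0 // ltW.
have h1 : (A / gam) ^+ 2 <= (eps / (2 * K)) ^+ 2 by nra.
have e3 : 2 * (eps / (2 * K)) ^+ 2 * K ^+ 2 = eps ^+ 2 / 2 by field; rewrite gt_eqF.
have h2 : 2 * (A / gam) ^+ 2 * K ^+ 2 <= eps ^+ 2 / 2.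
  rewrite -e3; apply: ler_wpM2r; first by apply: sqr_ge0.
  by apply: ler_wpM2l.
have h3 : (4 * C ^+ 2 * K ^+ 2 / (gam ^+ 2 * eps ^+ 2)) / nn <= 1.
  by rewrite ler_pdivrMr // mul1r ltW.
have h4 : 0 <= eps ^+ 2 / 2 by rewrite divr_ge0 // sqr_ge0.
have h5 : (4 * C ^+ 2 * K ^+ 2 / (gam ^+ 2 * eps ^+ 2)) / nn * (eps ^+ 2 / 2) <= eps ^+ 2 / 2.
  by rewrite -[X in _ <= X]mul1r; apply: ler_wpM2r.
lra.
Qed.

End H.

Theorem proposition2p4
  (R : realType) (d : measure_display) (T : measurableType d)
  (P : probability T R) (k : nat) (nu : R)
  (dnoisy dclean : forall n : nat, T -> 'I_n -> 'I_n -> R)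
  (xi : nat -> R)
  (G Gt : forall n : nat, T -> 'I_n -> 'I_n -> 'M[R]_k) :
  (0 < k)%N ->
  0 < nu ->
  (forall n w i j, 0 <= dnoisy n w i j) ->
  (forall n w i j, 0 <= dclean n w i j) ->
  oP1 P (fun n w => sup_offdiag
           (fun i j => dnoisy n w i j ^+ 2 - dclean n w i j ^+ 2 - xi n)) ->
  (exists C : R, 0 < C /\ exists N : nat, forall n, (N <= n)%N ->
     forall w i j, frob (G n w i j) <= C /\ frob (Gt n w i j) <= C) ->
  oP1 P (fun n w => sup_all (fun i j => frob (Gt n w i j - G n w i j))) ->
  (exists gamma : R, 0 < gamma /\ exists N : nat, forall n, (N <= n)%N ->
     forall w (i : 'I_n),
       gamma < n%:R^-1 * \sum_(j < n | j != i) expR (- dclean n w i j ^+ 2 / nu)) ->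
  oP1 P (fun n w =>
    opnorm
      (Lmx (\matrix_(i < n, j < n) expR (- dclean n w i j ^+ 2 / nu)) (G n w)
       - L0mx (\matrix_(i < n, j < n) expR (- dnoisy n w i j ^+ 2 / nu)) (Gt n w))).
Proof.
move=> k0 nu0 dn0 dc0 H1 [C [C0 [NC HC]]] H2 [gam [g0 [Ng Hg]]].
move=> eps e0 delta d0.
set K : R := k%:R.
have K0 : 0 < K by rewrite ltr0n.
pose eG := gam * eps / (4 * K).
have eG0 : 0 < eG by rewrite /eG divr_gt0 // ?mulr_gt0.
pose tau := Num.min 1 (gam * eps / (4 * K * C)).
have tau0 : 0 < tau by rewrite /tau lt_min ltr01 /= divr_gt0 // ?mulr_gt0.
have tau1 : tau <= 1 by rewrite /tau ge_min lexx.
have tau2 : tau <= gam * eps / (4 * K * C) by rewrite /tau ge_min lexx orbT.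
pose t := tau / 2.
pose eta := t * nu / 2.
have eta0 : 0 < eta by rewrite /eta /t !divr_gt0 // mulr_gt0 // divr_gt0.
pose lam := expR (eta / nu).
have lam1 : 1 <= lam.
  have := expR_ge1Dx (eta / nu); have : 0 <= eta / nu by rewrite divr_ge0 // ltW.
  rewrite /lam; lra.
have lam2 : lam ^+ 2 - 1 <= tau.
  have -> : lam ^+ 2 = expR t.
    by rewrite /lam expr2 -expRD; congr expR; rewrite /eta; field; rewrite gt_eqF.
  have t0 : 0 <= t by rewrite /t divr_ge0 // ltW.
  have t1 : t <= 1 / 2 by rewrite /t ler_pM2r // invr_gt0.
  have := @expR_small R t t0 t1; rewrite /t; lra.
pose X := eG + C * (lam ^+ 2 - 1).
have L0 : 0 <= lam ^+ 2 - 1 by rewrite subr_ge0 expr2; nra.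
have X0 : 0 <= X by rewrite /X; nra.
have hX : X / gam <= eps / (2 * K).
  have h : C * (lam ^+ 2 - 1) <= gam * eps / (4 * K).
    apply: le_trans (ler_wpM2l (ltW C0) (le_trans lam2 tau2)) _.
    by rewrite le_eqVlt; apply/orP; left; apply/eqP; field; rewrite !gt_eqF.
  rewrite ler_pdivrMr //; rewrite /X /eG.
  have -> : eps / (2 * K) * gam = gam * eps / (4 * K) + gam * eps / (4 * K).
    by field; rewrite gt_eqF.
  lra.
have [N1 HN1] := H1 eta eta0 (delta / 2) (divr_gt0 d0 (ltr0Sn R 1)).
have [N2 HN2] := H2 eG eG0 (delta / 2) (divr_gt0 d0 (ltr0Sn R 1)).
pose b := 4 * C ^+ 2 * K ^+ 2 / (gam ^+ 2 * eps ^+ 2).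
have b0 : 0 <= b by rewrite /b divr_ge0 // ?mulr_ge0 ?sqr_ge0 // ltW.
pose Nb := Num.Def.archi_bound b.
exists (maxn (maxn NC Ng) (maxn (maxn N1 N2) Nb)) => n hn.
move: hn; rewrite !geq_max => /andP[/andP[hNC hNg] /andP[/andP[hN1 hN2] hNb]].
have [A1 [mA1 [sA1 pA1]]] := HN1 n hN1.
have [A2 [mA2 [sA2 pA2]]] := HN2 n hN2.
exists (A1 `|` A2); split; first exact: measurableU.
split; last first.
  apply: le_trans (measureU2 P mA1 mA2) _.
  apply: le_trans (leeD pA1 pA2) _.
  by rewrite -EFinD lee_fin; lra.
have nb : b < n%:R.
  apply: lt_le_trans (archi_boundP b0) _; by rewrite ler_nat.
have npos : 0 < (n%:R : R) by apply: le_lt_trans nb.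
move=> w Hw.
case: (pselect (A1 w)) => [a1|na1]; first by left.
case: (pselect (A2 w)) => [a2|na2]; first by right.
exfalso.
have he : `|sup_offdiag (fun i j => dnoisy n w i j ^+ 2 - dclean n w i j ^+ 2 - xi n)| <= eta.
  by rewrite leNgt; apply/negP => h; apply: na1; apply: sA1.
have hg : `|sup_all (fun i j => frob (Gt n w i j - G n w i j))| <= eG.
  by rewrite leNgt; apply/negP => h; apply: na2; apply: sA2.
pose W := \matrix_(i < n, j < n) expR (- dclean n w i j ^+ 2 / nu).
pose Wt := \matrix_(i < n, j < n) expR (- dnoisy n w i j ^+ 2 / nu).
pose s := expR (- xi n / nu).
have s0 : 0 < s by apply: expR_gt0.
have hW : forall i j, 0 < W i j <= 1.
  move=> i j; rewrite mxE expR_gt0 expR_le1 /=.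
  by rewrite mulNr oppr_le0 divr_ge0 ?sqr_ge0 // ltW.
have hWt : forall i j, i != j -> s * W i j <= lam * Wt i j /\ Wt i j <= lam * s * W i j.
  move=> i j hij.
  have hb : `|dnoisy n w i j ^+ 2 - dclean n w i j ^+ 2 - xi n| <= eta.
    apply: le_trans he; apply: le_trans (ler_norm _).
    rewrite /sup_offdiag.
    apply: le_trans (@le_bigmax0 R _ (fun j0 => j0 != i)
      (fun j0 => `|dnoisy n w i j0 ^+ 2 - dclean n w i j0 ^+ 2 - xi n|) j _) _.
      by rewrite eq_sym.
    apply: (@le_bigmax0 R _ (fun _ => true) (fun i0 => \big[Num.max/0]_(j0 < n | j0 != i0)
      `|dnoisy n w i0 j0 ^+ 2 - dclean n w i0 j0 ^+ 2 - xi n|) i).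
    by [].
  move: hb; rewrite ler_norml => /andP[hb1 hb2].
  have ni : 0 < nu^-1 by rewrite invr_gt0.
  rewrite !mxE /lam /s -!expRD !ler_expR; split.
    have key : (- xi n + - dclean n w i j ^+ 2) * nu^-1
        <= (eta + - dnoisy n w i j ^+ 2) * nu^-1 by rewrite ler_pM2r //; lra.
    by move: key; rewrite !mulrDl; lra.
  have key : (- dnoisy n w i j ^+ 2) * nu^-1
        <= (eta + (- xi n + - dclean n w i j ^+ 2)) * nu^-1 by rewrite ler_pM2r //; lra.
  by move: key; rewrite !mulrDl; lra.
have hgam : forall i, gam * n%:R < \sum_(j < n | j != i) W i j.
  move=> i.
  have e : \sum_(j < n | j != i) W i j = \sum_(j < n | j != i) expR (- dclean n w i j ^+ 2 / nu).
    by apply: eq_bigr => j _; rewrite mxE.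
  rewrite e -ltr_pdivlMr //; rewrite mulrC; exact: Hg.
have hCC : forall i j, frob (G n w i j) <= C /\ frob (Gt n w i j) <= C.
  by move=> i j; apply: HC.
have hE : forall i j, frob (Gt n w i j - G n w i j) <= eG.
  move=> i j; apply: le_trans hg; apply: (le_trans _ (ler_norm _)).
  apply: le_trans (ler_norm (frob (Gt n w i j - G n w i j))) _.
  rewrite /sup_all.
  apply: le_trans (@le_bigmax0 R _ (fun _ => true)
      (fun j0 => `|frob (Gt n w i j0 - G n w i j0)|) j _) _ => //.
  by apply: (@le_bigmax0 R _ (fun _ => true) (fun i0 => \big[Num.max/0]_(j0 < n)
      `|frob (Gt n w i0 j0 - G n w i0 j0)|) i).
have hent := det_entry R n k W Wt (G n w) (Gt n w) C gam eG lam s g0 (ltW C0) lam1 s0 hW hWt hgam hCC hE.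
have x0 : 0 <= X / (gam * n%:R) by apply: divr_ge0 => //; rewrite ltW // mulr_gt0.
have y0 : 0 <= C / (gam * n%:R) by apply: divr_ge0; rewrite ltW // mulr_gt0.
have hbnd := sum_bound R n k _ _ _ x0 y0 hent.
rewrite !natrM -/K in hbnd.
have hfin := final_arith R X C gam eps K n%:R g0 e0 K0 npos X0 hX nb.
have [hop0 hop] := opnorm_bound R _ _ eps (ltW e0) (le_trans hbnd hfin).
move: Hw; rewrite /= ltNge (ger0_norm hop0).
by rewrite hop.
Qed.
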